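(* Consider the noiseless least squares deterministic dynamics under AdaGrad-Norm$(b,\eta)$ described in the context, in the regime $d\to\infty$. Assume that, for some $C>0$, the number of eigenvalues of $K$ below $C$ is $o(d)$, that $\langle X^\star,\omega_i\rangle=O(d^{-1/2})$ for all $i$, and that $X_0=0$. Then there exists some $\tilde\gamma>0$ such that $\gamma_t>\tilde\gamma$ for all $t>0$.
   Context: Noiseless least squares: $\mathcal R(X)=\frac12(X-X^\star)^TK(X-X^\star)$, $K\in\mathbb R^{d\times d}$ positive semidefinite with $\|K\|_{op}$ bounded independently of $d$, eigenpairs $(\lambda_i,\omega_i)$. Deterministic dynamics: $D_i^2(0)=d\langle X_0-X^\star,\omega_i\rangle^2$, $\frac{d}{dt}D_i^2(t)=-2\gamma_t\lambda_iD_i^2(t)+2\gamma_t^2\lambda_iR(t)$, $R(t)=\frac1{2d}\sum_i\lambda_iD_i^2(t)$, with AdaGrad-Norm learning rate $\gamma_t=\eta\big/\sqrt{b^2+\frac{2\mathrm{Tr}(K)}{d}\int_0^tR(s)\,ds}$, $b,\eta>0$. *)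

(* Defs.v *)
From Stdlib Require Import Reals.
From Coquelicot Require Import Coquelicot.
From mathcomp Require Import all_boot all_algebra.
From mathcomp Require Import Rstruct.
Set Implicit Arguments. Unset Strict Implicit. Unset Printing Implicit Defensive.
Import GRing.Theory Num.Theory.
Local Open Scope ring_scope.

Definition eig_coord (d : nat) (Om : 'M[R]_d) (v : 'cV[R]_d) (i : 'I_d) : R :=
  (row i Om *m v) ord0 ord0.

Definition risk (d : nat) (lam : 'I_d -> R) (D2 : 'I_d -> R -> R) (t : R) : R :=
  (2 * d%:R)^-1 * \sum_(i < d) lam i * D2 i t.

Definition adagrad_lr (b eta : R) (d : nat) (K : 'M[R]_d) (Rf : R -> R) (t : R) : R :=
  eta / sqrt (b ^+ 2 + 2 * \tr K / d%:R * RInt Rf 0 t).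

(* Main.v *)
Require Import Defs.
From Stdlib Require Import Reals Lra Classical.
From Coquelicot Require Import Coquelicot.
From mathcomp Require Import all_boot all_algebra.
From mathcomp Require Import Rstruct.
From mathcomp Require Import ssreflect.
Import GRing.Theory Num.Theory.

Open Scope R_scope.


Lemma cont_eps (h : R -> R) (m : R) : continuous h m -> forall eps, 0 < eps ->
  exists del, 0 < del /\ forall y, Rabs (y - m) < del -> Rabs (h y - h m) < eps.
Proof.
move/filterlim_locally=> H eps Heps.
case: (H (mkposreal eps Heps)) => del Hdel.
exists del; split; first exact: cond_pos.
move=> y Hy; exact: (Hdel y Hy).
Qed.

Lemma Rmin_form a b : Rmin a b = (a + b - Rabs (a - b)) / 2.
Proof.
destruct (Rle_dec a b).
  rewrite Rmin_left // Rabs_left1; lra.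
rewrite Rmin_right ?Rabs_right; lra.
Qed.

Lemma cont_min (f g : R -> R) (x : R) : continuous f x -> continuous g x ->
  continuous (fun y => Rmin (f y) (g y)) x.
Proof.
move=> Hf Hg.
have E : forall y : R, Hierarchy.mult (/2) (Hierarchy.plus (Hierarchy.plus (f y) (g y)) (Hierarchy.opp (Rabs (Hierarchy.plus (f y) (Hierarchy.opp (g y)))))) = Rmin (f y) (g y).
  move=> y; rewrite Rmin_form /Hierarchy.mult /Hierarchy.plus /Hierarchy.opp /=; rewrite /Rminus /Rdiv; ring.
apply: (continuous_ext _ _ _ E).
apply: continuous_mult; first exact: continuous_const.
apply: continuous_plus; first exact: continuous_plus.
apply: continuous_opp; apply: continuous_Rabs_comp.
apply: continuous_plus => //; exact: continuous_opp.
Qed.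

Lemma first_zero (h : R -> R) T : (forall x, continuous h x) -> 0 < h 0 ->
  (exists s, 0 <= s <= T /\ h s <= 0) ->
  exists t1, 0 < t1 <= T /\ h t1 = 0 /\ (forall s, 0 <= s < t1 -> 0 < h s).
Proof.
move=> Hc H0 [s0 [Hs0 Hhs0]].
pose E x := 0 <= x <= T /\ forall s, 0 <= s <= x -> 0 < h s.
have E0 : E 0.
  split; first lra. move=> s Hs; have -> : s = 0 by lra. done.
have bE : bound E by exists T => x [Hx _]; lra.
case: (completeness E bE (ex_intro _ 0 E0)) => m [Hub Hlub].
have m0 : 0 <= m by apply: Hub.
have mT : m <= T by apply: Hlub => x [Hx _]; lra.
have Hb : forall s, 0 <= s < m -> 0 < h s.
  move=> s Hs.
  case: (classic (exists x, E x /\ s < x)) => [[x [[_ Hx] Hsx]]|Hn].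
    apply: Hx; lra.
  have : m <= s.
    apply: Hlub => x Ex.
    case: (Rle_dec x s) => // /Rnot_le_lt Hxs; exfalso; apply: Hn; by exists x.
  lra.
have hm_ge : 0 <= h m.
  case: (Rle_dec 0 (h m)) => // /Rnot_le_lt Hneg.
  case: (@cont_eps h m (Hc m) (- h m) ltac:(lra)) => del [Hdel Hd].
  have mpos : 0 < m.
    case: (Req_dec m 0) => [E'|]; last lra. rewrite E' in Hneg; lra.
  pose s := Rmax 0 (m - del / 2).
  have Hs : 0 <= s < m.
    split; first exact: Rmax_l. apply: Rmax_lub_lt; lra.
  have := Hb s Hs.
  have : Rabs (s - m) < del.
    rewrite Rabs_left1; last lra.
    have : m - del / 2 <= s by apply: Rmax_r. lra.
  move/Hd => /Rabs_def2 [H1 H2]. lra.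
have hm_le : h m <= 0.
  case: (Rle_dec (h m) 0) => // /Rnot_le_lt Hpos.
  have Hall : forall s, 0 <= s <= m -> 0 < h s.
    move=> s Hs; case: (Req_dec s m) => [->//|Hne]; apply: Hb; lra.
  case: (Req_dec m T) => [EmT|HmT].
    have := Hall s0; rewrite EmT; move=> H; have := H Hs0; lra.
  case: (@cont_eps h m (Hc m) (h m) Hpos) => del [Hdel Hd].
  pose x := Rmin T (m + del / 2).
  have Ex : E x.
    split. split. have : 0 < Rmin T (m + del/2) by apply: Rmin_glb_lt; lra. rewrite /x; lra.
      exact: Rmin_l.
    move=> s Hs. case: (Rle_dec s m) => Hsm; first by apply: Hall; lra.
    have : Rabs (s - m) < del.
      rewrite Rabs_right; last lra.
      have : x <= m + del / 2 by apply: Rmin_r. lra.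
    move/Hd => /Rabs_def2 [H1 H2]. lra.
  have := Hub x Ex.
  have : m < x by apply: Rmin_glb_lt; lra.
  lra.
have hm0 : h m = 0 by lra.
exists m; split; last by split.
split => //. case: (Req_dec m 0) => [E'|]; last lra. rewrite E' in hm0; lra.
Qed.

Lemma deriv_sign (f : R -> R) (t l a : R) : is_derive f t l -> f t = 0 -> a < t ->
  (forall s, a < s < t -> 0 < f s) -> l <= 0.
Proof.
move=> /is_derive_Reals Hd Hft Hat Hpos.
case: (Rle_dec l 0) => // /Rnot_le_lt Hl.
case: (Hd (l / 2) ltac:(lra)) => del Hdel.
have del0 := cond_pos del.
pose hh := - (Rmin del (t - a)) / 2.
have Hm : 0 < Rmin del (t - a) by apply: Rmin_glb_lt; lra.
have Hm1 : Rmin del (t - a) <= del by apply: Rmin_l.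
have Hm2 : Rmin del (t - a) <= t - a by apply: Rmin_r.
have hh0 : hh <> 0 by rewrite /hh; lra.
have hhd : Rabs hh < del by rewrite /hh Rabs_left; lra.
have := Hdel hh hh0 hhd.
rewrite Hft Rminus_0_r => /Rabs_def2 [H1 H2].
have Hs : a < t + hh < t by rewrite /hh; lra.
have := Hpos _ Hs.
set q := f (t + hh) / hh in H1 H2.
have -> : f (t + hh) = q * hh by rewrite /q; field.
have : hh < 0 by rewrite /hh; lra.
nra.
Qed.
Lemma locR (x : R) (P : R -> Prop) :
  (exists e, 0 < e /\ forall y, Rabs (y - x) < e -> P y) -> locally x P.
Proof. case=> e [He H]; exists (mkposreal e He) => y Hy; apply: H; exact: Hy. Qed.

Lemma ext_cont (f : R -> R) : filterlim f (at_right 0) (locally (f 0)) ->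
  (forall t, 0 < t -> continuous f t) -> forall s, continuous (fun x => f (Rmax x 0)) s.
Proof.
move=> Hr Hc s.
case: (Rtotal_order s 0) => [Hs|[Hs|Hs]].
- apply: (continuous_ext_loc _ (fun _ => f 0)); last exact: continuous_const.
  apply: locR; exists (- s); split; first lra.
  move=> y /Rabs_def2 [H1 H2]; rewrite Rmax_right //; lra.
- rewrite Hs; apply/filterlim_locally => eps.
  move/filterlim_locally: Hr => /(_ eps) [del Hdel].
  exists del => y Hy.
  case: (Rle_dec y 0) => Hy0.
    have -> : Rmax y 0 = 0 by rewrite Rmax_right.
    have -> : Rmax 0 0 = 0 by rewrite Rmax_left; lra.
    exact: ball_center.
  have -> : Rmax y 0 = y by rewrite Rmax_left; lra.
  have -> : Rmax 0 0 = 0 by rewrite Rmax_left; lra.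
  apply: Hdel => //; lra.
- apply: (continuous_ext_loc _ f).
    apply: locR; exists s; split; first lra.
    move=> y /Rabs_def2 [H1 H2]; rewrite Rmax_left //; lra.
  exact: Hc.
Qed.
Lemma sum_derive (I : Type) (r : seq I) (F : I -> R -> R) (F' : I -> R) t :
  (forall i, is_derive (F i) t (F' i)) ->
  is_derive (fun x => (\sum_(i <- r) F i x)%R) t (\sum_(i <- r) F' i)%R.
Proof.
move=> H; elim: r => [|a r IH].
  apply: (is_derive_ext (fun _ => 0)); first by move=> x; rewrite big_nil.
  rewrite big_nil; exact: is_derive_const.
apply: (is_derive_ext (fun x => F a x + (\sum_(i <- r) F i x)%R)).
  by move=> x; rewrite big_cons.
rewrite big_cons; exact: is_derive_plus.
Qed.

Lemma sum_cont (I : Type) (r : seq I) (F : I -> R -> R) t :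
  (forall i, continuous (F i) t) ->
  continuous (fun x => (\sum_(i <- r) F i x)%R) t.
Proof.
move=> H; elim: r => [|a r IH].
  apply: (continuous_ext (fun _ => 0)); first by move=> x; rewrite big_nil.
  exact: continuous_const.
apply: (continuous_ext (fun x => plus (F a x) (\sum_(i <- r) F i x)%R)).
  by move=> x; rewrite big_cons.
exact: continuous_plus.
Qed.


Lemma bmin_le (I : eqType) (r : seq I) (F : I -> R) j : j \in r ->
  (\big[Rmin/1]_(i <- r) F i)%R <= F j.
Proof.
elim: r => [|a r IH] //; rewrite in_cons big_cons => /orP [/eqP ->|Hj].
  exact: Rmin_l.
apply: Rle_trans (IH Hj); exact: Rmin_r.
Qed.

Lemma bmin_nonpos (I : Type) (r : seq I) (F : I -> R) :
  (\big[Rmin/1]_(i <- r) F i)%R <= 0 -> exists i, F i <= 0.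
Proof.
elim: r => [|a r IH]; first by rewrite big_nil => H; change (1 <= 0) in H; lra.
rewrite big_cons => H.
case: (Rle_dec (F a) 0) => Ha; first by exists a.
apply: IH; move: H; rewrite /Rmin; case: Rle_dec => //; lra.
Qed.

Lemma min_cont (I : Type) (r : seq I) (F : I -> R -> R) t :
  (forall i, continuous (F i) t) ->
  continuous (fun x => (\big[Rmin/1]_(i <- r) F i x)%R) t.
Proof.
move=> H; elim: r => [|a r IH].
  apply: (continuous_ext (fun _ => 1)); first by move=> x; rewrite big_nil.
  exact: continuous_const.
apply: (continuous_ext (fun x => Rmin (F a x) (\big[Rmin/1]_(i <- r) F i x)%R)).
  by move=> x; rewrite big_cons.
exact: cont_min.
Qed.

Lemma sum_le n (F G : 'I_n -> R) : (forall i, F i <= G i) ->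
  (\sum_(i < n) F i)%R <= (\sum_(i < n) G i)%R.
Proof. move=> H; apply/RleP; apply: ler_sum => i _; apply/RleP; exact: H. Qed.

Lemma sum_ge0 n (F : 'I_n -> R) : (forall i, 0 <= F i) -> 0 <= (\sum_(i < n) F i)%R.
Proof. move=> H; apply/RleP; apply: sumr_ge0 => i _; apply/RleP; exact: H. Qed.

Lemma inv_ge0 x : 0 <= x -> 0 <= / x.
Proof.
move=> H; case: (Req_dec x 0) => [->|Hx]; first by rewrite Rinv_0; lra.
left; apply: Rinv_pos; lra.
Qed.

Definition ext (f : R -> R) (x : R) : R := f (Rmax x 0).

Definition lr (b eta c : R) (Rf : R -> R) (t : R) : R :=
  (eta / sqrt (b ^+ 2 + c * RInt Rf 0 t))%R.

Lemma lr_ge0 b eta c Rf t : 0 < eta -> 0 <= lr b eta c Rf t.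
Proof.
move=> He; rewrite /lr -RdivE /Rdiv; apply: Rmult_le_pos; first lra.
apply: inv_ge0; exact: sqrt_pos.
Qed.

Lemma lr_sq b eta c Rf t : 0 < b -> 0 < eta ->
  b * b / 2 <= b * b + c * RInt Rf 0 t ->
  (lr b eta c Rf t ^+ 2)%R <= 2 * (eta * eta) / (b * b).
Proof.
move=> Hb He HG; rewrite /lr expr2.
set G : R := (b ^+ 2 + c * RInt Rf 0 t)%R.
have HG' : b * b / 2 <= G by rewrite /G expr2.
have Gp : 0 < G by nra.
have sG := sqrt_lt_R0 _ Gp.
have -> : @eq R (eta / sqrt G * (eta / sqrt G))%R (eta * eta / (sqrt G * sqrt G)).
  rewrite -RmultE -!RdivE; field; lra.
rewrite sqrt_sqrt; last lra.
rewrite /Rdiv.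
have H1 : / G <= 2 * / (b * b).
  have -> : 2 * / (b * b) = / (b * b / 2) by field; lra.
  apply: Rinv_le_contravar => //; nra.
have := Rmult_le_compat_l (eta * eta) _ _ ltac:(nra) H1.
lra.
Qed.

Lemma risk_cont n (l : 'I_n -> R) (E : 'I_n -> R -> R) (x : R) :
  (forall i, continuous (E i) x) -> continuous (risk l E) x.
Proof.
move=> H.
have E1 : forall y : R, @Hierarchy.mult R_Ring ((2 * n%:R)^-1 : R)%R
   (\sum_(i < n) (@Hierarchy.mult R_Ring (l i) (E i y) : R))%R = risk l E y by [].
apply: (continuous_ext _ _ _ E1).
apply: continuous_mult; first exact: continuous_const.
apply: sum_cont => i; apply: continuous_mult => //; exact: continuous_const.
Qed.

Lemma exp_le x y : x <= y -> exp x <= exp y.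
Proof.
case=> [H|->]; last lra. left; exact: exp_increasing.
Qed.

Lemma le_sum1 n (F : 'I_n -> R) i : (forall j, 0 <= F j) -> F i <= (\sum_(j < n) F j)%R.
Proof.
move=> H; rewrite (bigD1 i) //= -RplusE.
have : 0 <= (\sum_(j < n | j != i) F j)%R.
  apply/RleP; apply: sumr_ge0 => j _; apply/RleP; exact: H.
move=> Hs; have := Rplus_le_compat_l (F i) _ _ Hs; rewrite Rplus_0_r; exact.
Qed.

Lemma R2E : (2%R : R) = 2.
Proof. by []. Qed.

Lemma cadd (f g : R -> R) (x : R) : continuous f x -> continuous g x ->
  continuous (fun y => f y + g y) x.
Proof. move=> Hf Hg; exact: (continuous_plus f g x Hf Hg). Qed.

Lemma csub (f g : R -> R) (x : R) : continuous f x -> continuous g x ->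
  continuous (fun y => f y - g y) x.
Proof. move=> Hf Hg; exact: (continuous_minus f g x Hf Hg). Qed.

Lemma cmulc (k : R) (f : R -> R) (x : R) : continuous f x ->
  continuous (fun y => k * f y) x.
Proof. move=> Hf; exact: (continuous_scal_r k f x Hf). Qed.

Lemma dadd (f g : R -> R) (x df dg : R) : is_derive f x df -> is_derive g x dg ->
  is_derive (fun y => f y + g y) x (df + dg).
Proof. move=> Hf Hg; exact: (is_derive_plus f g x df dg Hf Hg). Qed.

Lemma dsub (f g : R -> R) (x df dg : R) : is_derive f x df -> is_derive g x dg ->
  is_derive (fun y => f y - g y) x (df - dg).
Proof. move=> Hf Hg; exact: (is_derive_minus f g x df dg Hf Hg). Qed.

Lemma dmulc (k : R) (f : R -> R) (x df : R) : is_derive f x df ->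
  is_derive (fun y => k * f y) x (k * df).
Proof. move=> Hf; exact: (is_derive_scal f x k df Hf). Qed.

Lemma dln (f : R -> R) (x df : R) : is_derive f x df -> 0 < f x ->
  is_derive (fun y => ln (f y)) x (df * / f x).
Proof.
move=> Hf Hp; have := is_derive_comp ln f x (/ f x) df (is_derive_ln _ Hp) Hf.
by rewrite /scal /= /mult /=.
Qed.

Lemma cont_ge (f : R -> R) : (forall x, continuous f x) ->
  filterlim f (at_right 0) (locally (f 0)).
Proof.
move=> H; apply: filterlim_filter_le_1 (H 0).
exact: filter_le_within.
Qed.

Lemma sum_ode n (l u : 'I_n -> R) (g r : R) :
  (\sum_(i < n) (- (2 * g * l i * u i) + 2 * g ^+ 2 * l i * r))%R
  = (- (2 * g) * (\sum_(i < n) l i * u i) + 2 * g ^+ 2 * r * (\sum_(i < n) l i))%R.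
Proof.
rewrite big_split /= sumrN !mulr_sumr; congr (_ + _).
  rewrite -sumrN; by apply: eq_bigr => i _; rewrite mulNr !mulrA.
by apply: eq_bigr => i _; rewrite mulrAC.
Qed.

Lemma is_derive_eq (f : R -> R) x l l' : is_derive f x l -> l = l' -> is_derive f x l'.
Proof. by move=> H <-. Qed.


Lemma positivity n (l : 'I_n -> R) (D : 'I_n -> R -> R) b eta c :
  (0 < n)%N -> 0 < b -> 0 < eta -> (forall i, 0 <= l i) ->
  c = 2 * (\sum_(i < n) l i)%R / (n%:R)%R ->
  (forall i, 0 <= D i 0) ->
  (forall i, filterlim (D i) (at_right 0) (locally (D i 0))) ->
  (forall i t, 0 < t -> is_derive (D i) t
     (- (2 * lr b eta c (risk l D) t * l i * D i t)
      + 2 * (lr b eta c (risk l D) t) ^+ 2 * l i * risk l D t)%R) ->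
  forall t i, 0 <= t -> 0 <= D i t.
Proof.
move=> n0 Hb He Hl Hc HD0 Hrc Hder.
pose S : R := (\sum_(i < n) l i)%R.
pose N : R := (n%:R)%R.
have nR : 0 < N by apply/RltP; rewrite ltr0n.
have S0 : 0 <= S by apply: sum_ge0.
have {}Hc : c = 2 * S / N := Hc.
have c0 : 0 <= c by rewrite Hc /Rdiv; apply: Rle_mult_inv_pos; lra.
pose Dt i := ext (D i).
have Dc : forall i s, continuous (Dt i) s.
  move=> i; apply: ext_cont; first exact: Hrc.
  move=> t Ht; apply: ex_derive_continuous; eexists; exact: Hder.
pose Rt := risk l Dt.
have Rc : forall s, continuous Rt s by move=> s; apply: risk_cont => i; exact: Dc.
have Rint : forall a b0, ex_RInt Rt a b0.
  by move=> a b0; apply: ex_RInt_continuous => z _; exact: Rc.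
have RIe : forall s, 0 <= s -> RInt (risk l D) 0 s = RInt Rt 0 s.
  move=> s Hs; apply: RInt_ext => x; rewrite Rmin_left // Rmax_right // => Hx.
  rewrite /Rt /risk /Dt /ext Rmax_left //; lra.
move=> T i0 HT.
set g2 := 2 * (eta * eta) / (b * b).
have g20 : 0 <= g2 by rewrite /g2 /Rdiv; apply: Rle_mult_inv_pos; nra.
set kap := g2 * S * S / N + 1.
have kap1 : 1 <= kap.
  have : 0 <= g2 * S * S / N by rewrite /Rdiv; apply: Rle_mult_inv_pos => //; nra.
  rewrite /kap; lra.
set W := c * S / (2 * N) * T * exp (kap * T).
have W0 : 0 <= W.
  rewrite /W; have := exp_pos (kap * T).
  have : 0 <= c * S / (2 * N) by rewrite /Rdiv; apply: Rle_mult_inv_pos => //; nra.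
  move=> H1 H2; apply: Rmult_le_pos; [apply: Rmult_le_pos|]; lra.
set e0 := b * b / (2 * (W + 1)).
have e00 : 0 < e0 by rewrite /e0 /Rdiv; apply: Rmult_lt_0_compat; [nra | apply: Rinv_pos; lra].
have claim : forall eps, 0 < eps -> eps <= e0 -> forall s i, 0 <= s <= T ->
    0 < D i s + eps * exp (kap * s).
  move=> eps ep epe s0 i1 Hs0.
  pose v i s := Dt i s + eps * exp (kap * s).
  have vE : forall i s, 0 <= s -> v i s = D i s + eps * exp (kap * s).
    by move=> i s Hs; rewrite /v /Dt /ext Rmax_left.
  have vc : forall i s, continuous (v i) s.
    move=> i s; apply: (continuous_plus (Dt i) (fun s => eps * exp (kap * s))) => //.
    apply: ex_derive_continuous; auto_derive => //.
  pose h s := (\big[Rmin/1]_(i < n) v i s)%R.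
  have hc : forall s, continuous h s by move=> s; apply: min_cont.
  have h0 : 0 < h 0.
    case: (Rlt_le_dec 0 (h 0)) => // /bmin_nonpos [i Hi].
    move: Hi; rewrite vE; last lra.
    have := HD0 i; have := exp_pos (kap * 0); nra.
  rewrite -vE; last lra.
  case: (Rlt_le_dec 0 (v i1 s0)) => // Hv.
  have hs0 : h s0 <= 0 by apply: Rle_trans Hv; apply: bmin_le; exact: mem_index_enum.
  case: (@first_zero h T hc h0 (ex_intro _ s0 (conj Hs0 hs0))) => t1 [[t1p t1T] [ht1 hpos]].
  have : h t1 <= 0 by rewrite ht1; lra.
  move/bmin_nonpos => [i Hi].
  have vge : forall j, 0 <= v j t1.
    move=> j; rewrite -ht1; apply: bmin_le; exact: mem_index_enum.
  have vi0 : v i t1 = 0 by have := vge i; lra.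
  have vpos : forall j s, 0 <= s < t1 -> 0 < v j s.
    move=> j s Hs; apply: Rlt_le_trans (hpos s Hs) _; apply: bmin_le; exact: mem_index_enum.
  set gam := lr b eta c (risk l D) t1.
  set Rk := risk l D t1.
  have dv : is_derive (v i) t1
      ((- (2 * gam * l i * D i t1) + 2 * gam ^+ 2 * l i * Rk)%R + eps * (kap * exp (kap * t1))).
    apply: (is_derive_plus (Dt i) (fun s => eps * exp (kap * s))).
      apply: (is_derive_ext_loc (D i)); last exact: Hder.
      apply: locR; exists t1; split => // y /Rabs_def2 [H1 H2].
      rewrite /Dt /ext Rmax_left //; lra.
    auto_derive => //; ring.
  have := @deriv_sign (v i) t1 _ 0 dv vi0 t1p (fun s Hs => vpos i s (conj (Rlt_le _ _ (proj1 Hs)) (proj2 Hs))).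
  move=> Hd; exfalso.
  set E := eps * exp (kap * t1).
  have Ep : 0 < E by rewrite /E; have := exp_pos (kap * t1); nra.
  have DiE : D i t1 = - E by have := vE i t1 (Rlt_le _ _ t1p); rewrite vi0 /E; lra.
  have DjE : forall j, - E <= D j t1.
    by move=> j; have := vge j; rewrite vE /E; lra.
  have sumlin : forall (F : 'I_n -> R) (x : R), (forall j, x <= F j) ->
      S * x <= (\sum_(j < n) l j * F j)%R.
    move=> F x HF.
    have -> : S * x = (\sum_(j < n) l j * x)%R by rewrite /S RmultE mulr_suml.
    apply: sum_le => j; apply: Rmult_le_compat_l => //; exact: HF.
  have RkE : Rk = / (2 * N) * (\sum_(j < n) l j * D j t1)%R := erefl.
  have Rkb : / (2 * N) * (S * - E) <= Rk.
    rewrite RkE; apply: Rmult_le_compat_l; first by left; apply: Rinv_pos; lra.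
    exact: sumlin.
  have gam0 : 0 <= gam by apply: lr_ge0.
  set F := eps * exp (kap * T).
  have Fp : 0 < F by rewrite /F; have := exp_pos (kap * T); nra.
  have Rtb : forall x, 0 < x < t1 -> / (2 * N) * (S * - F) <= Rt x.
    move=> x Hx.
    have -> : Rt x = / (2 * N) * (\sum_(j < n) l j * Dt j x)%R := erefl.
    apply: Rmult_le_compat_l; first by left; apply: Rinv_pos; lra.
    apply: sumlin => j.
    have := vpos j x (conj (Rlt_le _ _ (proj1 Hx)) (proj2 Hx)).
    have : exp (kap * x) <= exp (kap * T) by apply: exp_le; nra.
    rewrite /v /F; nra.
  have Ib : t1 * (/ (2 * N) * (S * - F)) <= RInt (risk l D) 0 t1.
    rewrite RIe; last lra.
    have := RInt_const 0 t1 (/ (2 * N) * (S * - F)).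
    rewrite /scal /= /mult /= Rminus_0_r => <-.
    apply: RInt_le; [lra | apply: ex_RInt_const | exact: Rint | exact: Rtb].
  have Gb : b * b / 2 <= b * b + c * RInt (risk l D) 0 t1.
    have H1 : c * (t1 * (/ (2 * N) * (S * - F))) <= c * RInt (risk l D) 0 t1.
      exact: Rmult_le_compat_l.
    have H2 : - (eps * W) <= c * (t1 * (/ (2 * N) * (S * - F))).
      have -> : c * (t1 * (/ (2 * N) * (S * - F))) = - (c * S / (2 * N) * t1 * F) by field; lra.
      have -> : eps * W = c * S / (2 * N) * T * F by rewrite /W /F; ring.
      have : 0 <= c * S / (2 * N) by rewrite /Rdiv; apply: Rle_mult_inv_pos => //; nra.
      move=> H; apply: Ropp_le_contravar; apply: Rmult_le_compat_r; first lra.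
      apply: Rmult_le_compat_l => //.
    have H3 : eps * W <= b * b / 2.
      apply: Rle_trans (Rmult_le_compat_r _ _ _ W0 epe) _.
      rewrite /e0 /Rdiv; have := Rinv_pos (2 * (W + 1)) ltac:(lra).
      have -> : b * b * / (2 * (W + 1)) * W = b * b / 2 * (W / (W + 1)) by field; lra.
      have : W / (W + 1) <= 1.
        apply: (Rmult_le_reg_r (W + 1)); first lra.
        rewrite /Rdiv Rmult_assoc Rinv_l; lra.
      nra.
    have : (b ^+ 2)%R = b * b := expr2 b.
    lra.
  have gsq := @lr_sq b eta c (risk l D) t1 Hb He Gb.
  have liS : l i <= S by apply: le_sum1.
  move: Hd; rewrite -/gam -/Rk expr2 -!RmultE -!RplusE -RoppE DiE.
  rewrite -/g2 in gsq; move: gsq; rewrite expr2 -RmultE => gsq.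
  set A := gam * gam * l i.
  have A0 : 0 <= A by rewrite /A; have := Hl i; nra.
  have Ag : A <= g2 * S.
    rewrite /A; apply: Rmult_le_compat; [nra | exact: Hl | exact: gsq | exact: liS].
  set q := S * E / (2 * N).
  have q0 : 0 <= q by rewrite /q /Rdiv; apply: Rle_mult_inv_pos; nra.
  have Rkq : - q <= Rk.
    have <- : / (2 * N) * (S * - E) = - q by rewrite /q; field; lra.
    exact: Rkb.
  have H1 : A * - q <= A * Rk by apply: Rmult_le_compat_l.
  have H2 : A * q <= g2 * S * q by apply: Rmult_le_compat_r.
  have H3 : kap * E = 2 * g2 * S * q + E by rewrite /kap /q; field; lra.
  have H4 : 0 <= gam * l i * E.
    apply: Rmult_le_pos; [apply: Rmult_le_pos|]; [exact: gam0|exact: Hl|lra].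
  rewrite -/E !R2E.
  have -> : eps * (kap * exp (kap * t1)) = kap * E by rewrite /E; ring.
  have -> : 2 * (gam * gam) * l i * Rk = 2 * (A * Rk) by rewrite /A; ring.
  lra.
case: (Rle_dec 0 (D i0 T)) => // /Rnot_le_lt Hneg.
pose eps := Rmin e0 (- D i0 T / (2 * exp (kap * T))).
have ep : 0 < eps.
  apply: Rmin_glb_lt => //; rewrite /Rdiv; apply: Rmult_lt_0_compat; first lra.
  apply: Rinv_pos; have := exp_pos (kap * T); lra.
have := claim eps ep (Rmin_l _ _) T i0 (conj HT (Rle_refl T)).
have : eps <= - D i0 T / (2 * exp (kap * T)) by apply: Rmin_r.
have := exp_pos (kap * T).
move: (exp (kap * T)) => X HX.
have -> : - D i0 T / (2 * X) = (- D i0 T / 2) * / X by field; lra.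
move=> H1.
have : eps * X <= - D i0 T / 2.
  have := Rmult_le_compat_r X _ _ (Rlt_le _ _ HX) H1.
  by rewrite Rmult_assoc Rinv_l ?Rmult_1_r; lra.
lra.
Qed.


Lemma conservation n (l : 'I_n -> R) (D : 'I_n -> R -> R) b eta c :
  (0 < n)%N -> 0 < b -> 0 < eta -> (forall i, 0 <= l i) ->
  c = 2 * (\sum_(i < n) l i)%R / (n%:R)%R ->
  (forall i, 0 <= D i 0) ->
  (forall i, filterlim (D i) (at_right 0) (locally (D i 0))) ->
  (forall i t, 0 < t -> is_derive (D i) t
     (- (2 * lr b eta c (risk l D) t * l i * D i t)
      + 2 * (lr b eta c (risk l D) t) ^+ 2 * l i * risk l D t)%R) ->
  forall t, 0 < t ->
   let S : R := (\sum_(i < n) l i)%R in let N : R := (n%:R)%R in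
   let G := b * b + c * RInt (risk l D) 0 t in
   S / N * (/ N * (\sum_(i < n) D i t)%R) + 4 * eta * sqrt G - S / N * (eta * eta) * ln G
   = S / N * (/ N * (\sum_(i < n) D i 0)%R) + 4 * eta * b - S / N * (eta * eta) * ln (b * b)
   /\ b * b <= G /\ 0 <= (\sum_(i < n) D i t)%R.
Proof.
move=> n0 Hb He Hl Hc0 HD0 Hrc Hder t0 Ht0 S N G.
have pos := @positivity n l D b eta c n0 Hb He Hl Hc0 HD0 Hrc Hder.
have nR : 0 < N by apply/RltP; rewrite ltr0n.
have S0 : 0 <= S by apply: sum_ge0.
have Hc : c = 2 * S / N := Hc0.
have c0 : 0 <= c by rewrite Hc /Rdiv; apply: Rle_mult_inv_pos; lra.
pose Dt i := ext (D i).
have Dc : forall i s, continuous (Dt i) s.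
  move=> i; apply: ext_cont; first exact: Hrc.
  move=> t Ht; apply: ex_derive_continuous; eexists; exact: Hder.
pose Rt := risk l Dt.
have Rc : forall s, continuous Rt s by move=> s; apply: risk_cont => i; exact: Dc.
have Rint : forall a b0, ex_RInt Rt a b0.
  by move=> a b0; apply: ex_RInt_continuous => z _; exact: Rc.
have RIe : forall s, 0 <= s -> RInt (risk l D) 0 s = RInt Rt 0 s.
  move=> s Hs; apply: RInt_ext => x; rewrite Rmin_left // Rmax_right // => Hx.
  rewrite /Rt /risk /Dt /ext Rmax_left //; lra.
have Rt0 : forall x, 0 <= Rt x.
  move=> x; have -> : Rt x = / (2 * N) * (\sum_(j < n) l j * Dt j x)%R := erefl.
  apply: Rmult_le_pos; first by left; apply: Rinv_pos; lra.
  apply: sum_ge0 => j; apply: Rmult_le_pos => //; apply: pos; exact: Rmax_r.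
pose I x := RInt Rt 0 x.
have Ider : forall x, is_derive I x (Rt x).
  move=> x; apply: is_derive_RInt; last exact: Rc.
  apply: filter_forall => y; apply: RInt_correct; exact: Rint.
have I0 : forall x, 0 <= x -> 0 <= I x.
  move=> x Hx; apply: RInt_ge_0; [lra | exact: Rint | move=> y _; exact: Rt0].
pose H s := b * b + c * I s.
have Hd : forall x, is_derive H x (0 + c * Rt x).
  move=> x; apply: dadd; [exact: is_derive_const | apply: dmulc; exact: Ider].
have Hcont : forall x, continuous H x.
  move=> x; apply: ex_derive_continuous; eexists; exact: Hd.
pose Gt := ext H.
have Gc : forall x, continuous Gt x.
  by apply: ext_cont; [apply: cont_ge | move=> x _; exact: Hcont].
have Gge : forall x, b * b <= Gt x.
  move=> x; rewrite /Gt /ext /H; have := I0 (Rmax x 0) (Rmax_r _ _).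
  move=> h; have := Rmult_le_pos _ _ c0 h; lra.
pose Qt s := / N * (\sum_(i < n) Dt i s)%R.
pose Phi s := S / N * Qt s + 4 * eta * sqrt (Gt s) - S / N * (eta * eta) * ln (Gt s).
have Phic : forall x, continuity_pt Phi x.
  move=> x; apply/continuity_pt_filterlim.
  have Gp : 0 < Gt x by have := Gge x; nra.
  apply: csub; first apply: cadd.
  - apply: cmulc; apply: cmulc; apply: sum_cont => i; exact: Dc.
  - apply: cmulc; apply: continuous_comp; first exact: Gc.
    apply/continuity_pt_filterlim; apply: continuity_pt_sqrt; lra.
  - apply: cmulc; apply: continuous_comp; first exact: Gc.
    apply: ex_derive_continuous; eexists; exact: is_derive_ln.
have Phid : forall x, 0 < x -> is_derive Phi x 0.
  move=> x Hx.
  have Gp : 0 < Gt x by have := Gge x; nra.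
  have GtH : locally x (fun y => H y = Gt y).
    apply: locR; exists x; split => // y /Rabs_def2 [H1 H2].
    rewrite /Gt /ext Rmax_left //; lra.
  have Gd : is_derive Gt x (0 + c * Rt x) by apply: is_derive_ext_loc GtH (Hd x).
  pose dD i := (- (2 * lr b eta c (risk l D) x * l i * D i x)
      + 2 * (lr b eta c (risk l D) x) ^+ 2 * l i * risk l D x)%R.
  have Qd : is_derive Qt x (/ N * (\sum_(i < n) dD i)%R).
    apply: (is_derive_ext_loc (fun s => / N * (\sum_(i < n) D i s)%R)).
      apply: locR; exists x; split => // y /Rabs_def2 [H1 H2].
      rewrite /Qt /Dt /ext Rmax_left //; lra.
    apply: dmulc; apply: sum_derive => i; exact: Hder.
  have P1 := @dmulc (S / N) _ _ _ Qd.
  have P2 := @dmulc (4 * eta) _ _ _ (is_derive_sqrt _ _ _ Gd Gp).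
  have P3 := @dmulc (S / N * (eta * eta)) _ _ _ (@dln _ _ _ Gd Gp).
  have Pd := @dsub _ _ _ _ _ (@dadd _ _ _ _ _ P1 P2) P3.
  apply: (@is_derive_eq _ _ _ _ Pd).
  have gE : lr b eta c (risk l D) x = eta / sqrt (Gt x).
    rewrite /lr /Gt /ext /H Rmax_left; last lra.
    rewrite RIe; last lra. by rewrite expr2.
  have RtE : Rt x = risk l D x by rewrite /Rt /risk /Dt /ext Rmax_left //; lra.
  have sumE : (\sum_(i < n) dD i)%R = (- (2 * lr b eta c (risk l D) x) * (\sum_(i < n) l i * D i x)
      + 2 * lr b eta c (risk l D) x ^+ 2 * risk l D x * S)%R := @sum_ode n l (fun i => D i x) _ _.
  rewrite sumE RtE gE.
  set A := (\sum_(i < n) l i * D i x)%R.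
  have RkE : risk l D x = / (2 * N) * A := erefl.
  rewrite RkE Hc expr2 -!RmultE -!RplusE -RoppE R2E.
  have sq := sqrt_lt_R0 _ Gp.
  have GE : Gt x = sqrt (Gt x) * sqrt (Gt x) by rewrite sqrt_sqrt; lra.
  set q := sqrt (Gt x) in sq GE *.
  rewrite GE.
  match goal with |- ?a = ?b => change (@eq R a b) end.
  field; lra.
have [x1 [_ HM]] : exists c', 0 <= c' <= t0 /\ Phi t0 - Phi 0 = 0 * (t0 - 0).
  have := MVT_gen Phi 0 t0 (fun _ => 0); rewrite /= Rmin_left ?Rmax_right; try lra.
  apply; [move=> x Hx; apply: Phid; lra | move=> x _; exact: Phic].
have R00 : Rmax 0 0 = 0 by rewrite Rmax_left; lra.
have Rt00 : Rmax t0 0 = t0 by rewrite Rmax_left; lra.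
have GtE : Gt t0 = G by rewrite /Gt /ext /H Rt00 /I -RIe //; lra.
have Gt0 : Gt 0 = b * b by rewrite /Gt /ext /H R00 /I RInt_point /zero /=; ring.
have QtE : Qt t0 = / N * (\sum_(i < n) D i t0)%R by rewrite /Qt /Dt /ext Rt00.
have Qt0 : Qt 0 = / N * (\sum_(i < n) D i 0)%R by rewrite /Qt /Dt /ext R00.
split; last split.
- move: HM; rewrite /Phi GtE Gt0 QtE Qt0 sqrt_square; lra.
- rewrite -GtE; exact: Gge.
- apply: sum_ge0 => i; apply: pos; lra.
Qed.


Lemma ln_le_sub1 y : 0 < y -> ln y <= y - 1.
Proof. move=> Hy; have := exp_ineq1_le (ln y); rewrite exp_ln //; lra. Qed.

Lemma bound_G (sig Q Q0 G b eta Lm M2 : R) : 0 < b -> 0 < eta -> 0 <= sig <= Lm ->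
  0 <= Q -> Q0 <= M2 -> 0 <= M2 -> b * b <= G ->
  sig * Q + 4 * eta * sqrt G - sig * (eta * eta) * ln G
   = sig * Q0 + 4 * eta * b - sig * (eta * eta) * ln (b * b) ->
  sqrt G <= b * ((Lm * M2 + 4 * eta * b) / (4 * eta * b) + Lm * eta / b)
             * ((Lm * M2 + 4 * eta * b) / (4 * eta * b) + Lm * eta / b).
Proof.
move=> Hb He [Hs HsL] HQ HQ0 HM HG Heq.
set u := sqrt G in Heq *.
have ub : b <= u by rewrite /u -(sqrt_square b); [apply: sqrt_le_1_alt | lra].
have Gu : G = u * u by rewrite /u sqrt_sqrt; nra.
set y := sqrt (u / b).
have ub1 : 1 <= u / b by apply: (Rmult_le_reg_r b) => //; rewrite /Rdiv Rmult_assoc Rinv_l; lra.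
have yy : y * y = u / b by rewrite /y sqrt_sqrt; lra.
have y1 : 1 <= y by rewrite /y -sqrt_1; apply: sqrt_le_1_alt.
have uy : u = b * (y * y) by rewrite yy; field; lra.
have lnE : ln G - ln (b * b) = 4 * ln y.
  have yp : 0 < y by lra.
  have l1 : ln G = ln u + ln u by rewrite Gu ln_mult; lra.
  have l2 : ln u = ln b + (ln y + ln y) by rewrite uy !ln_mult; nra.
  have l3 : ln (b * b) = ln b + ln b by rewrite ln_mult.
  lra.
have lny : ln y <= y by have := ln_le_sub1 y ltac:(lra); lra.
have lny0 : 0 <= ln y by rewrite -ln_1; case: y1 => [h|<-]; [left; apply: ln_increasing; lra | lra].
have key : 4 * eta * u <= Lm * M2 + 4 * eta * b + 4 * Lm * (eta * eta) * y.
  have H1 : 4 * eta * u = sig * Q0 - sig * Q + 4 * eta * b + sig * (eta * eta) * (ln G - ln (b * b)) by lra.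
  rewrite H1 lnE.
  have : sig * Q0 <= sig * M2 by apply: Rmult_le_compat_l.
  have : sig * M2 <= Lm * M2 by apply: Rmult_le_compat_r.
  have : 0 <= sig * Q by nra.
  have : sig * (eta * eta) * (4 * ln y) <= Lm * (eta * eta) * (4 * y).
    apply: Rmult_le_compat; try nra.
  lra.
set a := (Lm * M2 + 4 * eta * b) / (4 * eta * b).
set be := Lm * eta / b.
have ya : y <= a + be.
  have H4 : 0 < 4 * eta * b by nra.
  have : y * y <= a + be * y.
    rewrite /a /be; apply: (Rmult_le_reg_r (4 * eta * b)) => //.
    have -> : (Lm * M2 + 4 * eta * b) / (4 * eta * b) + Lm * eta / b * y = (Lm * M2 + 4 * eta * b + 4 * Lm * (eta * eta) * y) / (4 * eta * b) by field; lra.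
    have -> : (Lm * M2 + 4 * eta * b + 4 * Lm * (eta * eta) * y) / (4 * eta * b) * (4 * eta * b) = Lm * M2 + 4 * eta * b + 4 * Lm * (eta * eta) * y by field; lra.
    rewrite yy; have -> : u / b * (4 * eta * b) = 4 * eta * u by field; lra.
    lra.
  have a0 : 0 <= a by rewrite /a /Rdiv; apply: Rle_mult_inv_pos; nra.
  have be0 : 0 <= be by rewrite /be /Rdiv; apply: Rle_mult_inv_pos; nra.
  nra.
rewrite uy Rmult_assoc; apply: Rmult_le_compat_l; first lra.
apply: Rmult_le_compat; lra.
Qed.

Close Scope R_scope.
Local Open Scope ring_scope.

Lemma keyE d (K Om : 'M[R]_d) (lam : 'I_d -> R) :
  (forall i, K *m (row i Om)^T = lam i *: (row i Om)^T) ->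
  forall k j, (K *m Om^T) k j = lam j * Om j k.
Proof.
move=> H k j.
have := congr1 (fun M : 'cV[R]_d => M k 0) (H j).
rewrite !mxE => <-; apply: eq_bigr => m _; by rewrite !mxE.
Qed.

Lemma traceE d (K Om : 'M[R]_d) (lam : 'I_d -> R) :
  Om *m Om^T = 1%:M ->
  (forall i, K *m (row i Om)^T = lam i *: (row i Om)^T) ->
  \tr K = \sum_(i < d) lam i.
Proof.
move=> HO H.
have HO' : Om^T *m Om = 1%:M by apply: mulmx1C.
have -> : K = K *m Om^T *m Om by rewrite -mulmxA HO' mulmx1.
rewrite mxtrace_mulC /mxtrace; apply: eq_bigr => i _.
rewrite mxE.
have := congr1 (fun M : 'M[R]_d => M i i) HO; rewrite !mxE eqxx /= ?mulr1n => Hii.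
rewrite -[RHS]mulr1 -Hii mulr_sumr; apply: eq_bigr => k _.
by rewrite (@keyE d K Om lam H) !mxE mulrCA.
Qed.

Lemma lam_sq d (K Om : 'M[R]_d) (lam : 'I_d -> R) (L : R) :
  Om *m Om^T = 1%:M ->
  (forall i, K *m (row i Om)^T = lam i *: (row i Om)^T) ->
  (forall (v : 'cV[R]_d), ((K *m v)^T *m (K *m v)) ord0 ord0 <= L ^+ 2 * (v^T *m v) ord0 ord0) ->
  forall i, lam i ^+ 2 <= L ^+ 2.
Proof.
move=> HO H HL i.
have := HL (row i Om)^T; rewrite H trmxK.
have E1 : (row i Om *m (row i Om)^T) 0 0 = 1.
  have := congr1 (fun M : 'M[R]_d => M i i) HO; rewrite !mxE eqxx /= ?mulr1n => <-.
  by apply: eq_bigr => k _; rewrite !mxE.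
have E2 : ((lam i *: (row i Om)^T)^T *m (lam i *: (row i Om)^T)) 0 0 = lam i ^+ 2.
  rewrite -[RHS]mulr1 -E1 !mxE mulr_sumr; apply: eq_bigr => k _; rewrite !mxE expr2.
  by rewrite mulrACA.
by rewrite E1 E2 mulr1.
Qed.


Theorem proposition4
  (b eta : R)
  (K : forall d : nat, 'M[R]_d)
  (lam : forall d : nat, 'I_d -> R)
  (Om : forall d : nat, 'M[R]_d)
  (Xstar X0 : forall d : nat, 'cV[R]_d)
  (D2 : forall d : nat, 'I_d -> R -> R) :
  0 < b -> 0 < eta ->
  (forall d, Om d *m (Om d)^T = 1%:M) ->
  (forall d (i : 'I_d), K d *m (row i (Om d))^T = lam d i *: (row i (Om d))^T) ->
  (forall d (i : 'I_d), 0 <= lam d i) ->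
  (exists L : R, forall d (v : 'cV[R]_d),
      ((K d *m v)^T *m (K d *m v)) ord0 ord0 <= L ^+ 2 * (v^T *m v) ord0 ord0) ->
  (exists C : R, 0 < C /\
     forall eps : R, 0 < eps -> exists d0 : nat, forall d : nat, (d0 <= d)%N ->
       (#|[set i : 'I_d | lam d i < C]|)%:R <= eps * d%:R) ->
  (exists (M : R) (d0 : nat), forall d : nat, (d0 <= d)%N -> forall i : 'I_d,
       `|eig_coord (Om d) (Xstar d) i| <= M / sqrt d%:R) ->
  (forall d, X0 d = 0) ->
  (forall d (i : 'I_d), D2 d i 0 = d%:R * (eig_coord (Om d) (X0 d - Xstar d) i) ^+ 2) ->
  (forall d (i : 'I_d), filterlim (D2 d i) (at_right 0) (locally (D2 d i 0))) ->
  (forall d (i : 'I_d) (t : R), 0 < t ->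
     is_derive (D2 d i) t
       (- (2 * adagrad_lr b eta (K d) (risk (lam d) (D2 d)) t * lam d i * D2 d i t)
        + 2 * (adagrad_lr b eta (K d) (risk (lam d) (D2 d)) t) ^+ 2 * lam d i
            * risk (lam d) (D2 d) t)) ->
  exists gt : R, 0 < gt /\
    exists d0 : nat, forall d : nat, (d0 <= d)%N -> forall t : R, 0 < t ->
      gt < adagrad_lr b eta (K d) (risk (lam d) (D2 d)) t.
Proof.
move=> Hb He HO Heig Hl0 [L HL] _ [M [d1 HM]] HX0 HD0 Hrc Hder.
move: Hb He => /RltP Hb /RltP He.
Open Scope R_scope.
have Hl : forall d (i : 'I_d), 0 <= lam d i by move=> d i; apply/RleP; exact: Hl0.
clear Hl0.
have {}Hb : 0 < b := Hb.
have {}He : 0 < eta := He.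
pose Lm := Rabs L.
pose M2 := M * M.
pose a := (Lm * M2 + 4 * eta * b) / (4 * eta * b).
pose be := Lm * eta / b.
pose B := b * (a + be) * (a + be).
have Lm0 : 0 <= Lm := Rabs_pos L.
have M20 : 0 <= M2 by rewrite /M2; nra.
have a1 : 1 <= a.
  rewrite /a; have H4 : 0 < 4 * eta * b by nra.
  apply: (Rmult_le_reg_r (4 * eta * b)) => //.
  have -> : (Lm * M2 + 4 * eta * b) / (4 * eta * b) * (4 * eta * b) = Lm * M2 + 4 * eta * b by field; lra.
  have : 0 <= Lm * M2 by nra. lra.
have be0 : 0 <= be by rewrite /be /Rdiv; apply: Rle_mult_inv_pos; nra.
have B0 : 0 < B.
  rewrite /B; have : 0 < a + be by lra.
  move=> h; apply: Rmult_lt_0_compat => //; apply: Rmult_lt_0_compat => //.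
exists (eta / (2 * B)); split.
  apply/RltP; rewrite /Rdiv; apply: Rmult_lt_0_compat => //; apply: Rinv_pos; lra.
exists (maxn d1 1) => d Hd t /RltP Ht.
have d1d : (d1 <= d)%N by apply: leq_trans Hd; exact: leq_maxl.
have d0 : (0 < d)%N by apply: leq_trans Hd; exact: leq_maxr.
pose c := (2 * \tr (K d) / d%:R)%R.
have trE := @traceE d (K d) (Om d) (lam d) (HO d) (Heig d).
have Hc : c = 2 * (\sum_(i < d) lam d i)%R / (d%:R)%R by rewrite /c trE.
have Nd : 0 < (d%:R : R)%R by apply/RltP; rewrite ltr0n.
have coordE : forall i, eig_coord (Om d) (X0 d - Xstar d) i = - eig_coord (Om d) (Xstar d) i.
  move=> i; rewrite /eig_coord HX0 sub0r mulmxN; by rewrite mxE.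
have D0b : forall i, 0 <= D2 d i 0 <= M2.
  move=> i; rewrite HD0 coordE sqrrN expr2.
  set x := eig_coord (Om d) (Xstar d) i.
  have Hx : Rabs x <= M / sqrt (d%:R)%R by apply/RleP; exact: HM d d1d i.
  have sd := sqrt_lt_R0 _ Nd.
  have xx : x * x = Rabs x * Rabs x by rewrite -Rabs_mult Rabs_right //; nra.
  have ax := Rabs_pos x.
  have : x * x <= M / sqrt (d%:R)%R * (M / sqrt (d%:R)%R).
    rewrite xx; apply: Rmult_le_compat => //.
  have -> : M / sqrt (d%:R)%R * (M / sqrt (d%:R)%R) = M2 / (d%:R)%R.
    rewrite /M2 -{3}(sqrt_sqrt (d%:R)%R); [field; lra | lra].
  move=> h; split.
    have : 0 <= x * x by nra.
    move=> h2; change (0 <= (d%:R : R) * (x * x)); nra.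
  change ((d%:R : R) * (x * x) <= M2).
  have := Rmult_le_compat_l (d%:R : R)%R _ _ (Rlt_le _ _ Nd) h.
  have -> : (d%:R : R)%R * (M2 / (d%:R)%R) = M2 by field; lra.
  done.
have := @conservation d (lam d) (D2 d) b eta c d0 Hb He (Hl d) Hc (fun i => proj1 (D0b i)) (Hrc d) (fun i s Hs => Hder d i s (ltac:(apply/RltP; exact: Hs))) t Ht.
move=> /= [Heq [HG HQ]].
have lamL : forall i, lam d i <= Lm.
  move=> i; have := @lam_sq d (K d) (Om d) (lam d) L (HO d) (Heig d) (HL d) i.
  move/RleP; rewrite !expr2 -!RmultE => h.
  have hL : Lm * Lm = L * L by rewrite /Lm -Rabs_mult Rabs_right //; nra.
  have := Hl d i; nra.
have sumc : forall x : R, (\sum_(i < d) x)%R = x * (d%:R)%R.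
  by move=> x; rewrite RmultE sumr_const card_ord mulr_natr.
have S0 : 0 <= (\sum_(i < d) lam d i)%R by apply: sum_ge0.
have SL : (\sum_(i < d) lam d i)%R <= Lm * (d%:R)%R by rewrite -sumc; apply: sum_le.
have sig : 0 <= (\sum_(i < d) lam d i)%R / (d%:R)%R <= Lm.
  split; first by rewrite /Rdiv; apply: Rle_mult_inv_pos.
  apply: (Rmult_le_reg_r (d%:R)%R) => //.
  have -> : (\sum_(i < d) lam d i)%R / (d%:R)%R * (d%:R)%R = (\sum_(i < d) lam d i)%R by field; lra.
  done.
have Q0 : 0 <= / (d%:R)%R * (\sum_(i < d) D2 d i t)%R.
  apply: Rmult_le_pos => //; left; exact: Rinv_pos.
have QM : / (d%:R)%R * (\sum_(i < d) D2 d i 0)%R <= M2.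
  have : (\sum_(i < d) D2 d i 0)%R <= M2 * (d%:R)%R by rewrite -sumc; apply: sum_le => i; case: (D0b i).
  move=> h; apply: (Rmult_le_reg_l (d%:R)%R) => //.
  rewrite -Rmult_assoc Rinv_r; lra.
have := @bound_G _ _ _ _ b eta Lm M2 Hb He sig Q0 QM M20 HG Heq.
rewrite -/a -/be -/B => hB.
set G := (b * b + c * RInt (risk (lam d) (D2 d)) 0 t) in HG hB.
have sG : 0 < sqrt G by apply: sqrt_lt_R0; nra.
have -> : adagrad_lr b eta (K d) (risk (lam d) (D2 d)) t = eta / sqrt G.
  by rewrite /adagrad_lr /G expr2.
apply/RltP; rewrite /Rdiv; apply: Rmult_lt_compat_l => //.
apply: Rinv_lt_contravar; first nra. lra.
Qed.
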